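(* Let $P$ and $P'$ be strictly convex closed polyhedra in $\mathbb{R}^3$ with the same combinatorial structure (with a fixed combinatorial equivalence), such that corresponding faces are affine-equivalent. Suppose there is an edge path $\gamma$ on $P$ such that (i) each vertex of $\gamma$ is incident to exactly three edges of $P$, and (ii) every face of $P$ is incident to at least one vertex of $\gamma$. Then $P$ and $P'$ are affine-equivalent.
   Context: A polyhedron is a connected two-dimensional polyhedral surface in $\mathbb{R}^3$ composed of finitely many convex polygons (its faces). A closed convex polyhedron is strictly convex if none of its dihedral angles equals $\pi$. Two polyhedra have the same combinatorial structure (are combinatorially equivalent) if there is an incidence-preserving bijection between their vertices, edges and faces. Two corresponding polygons (resp. polyhedra) are affine-equivalent if there is a nondegenerate affine map carrying the first onto the second and carrying each vertex, edge (and face) to the corresponding one under the fixed correspondence. An edge path is a sequence of vertices in which consecutive vertices are joined by edges of $P$. *)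

(* Defs.v *)
From HB Require Import structures.
From mathcomp Require Import all_boot all_order all_algebra.
From mathcomp Require Import reals.
Set Implicit Arguments. Unset Strict Implicit. Unset Printing Implicit Defensive.
Import Order.TTheory GRing.Theory Num.Theory.
Local Open Scope ring_scope.

Section Polyhedra.
Variable R : realType.
Variable V : finType.
(* A polyhedron is given by its (finitely many) vertices, indexed by V. *)
Variable p : V -> 'rV[R]_3.

Definition dotv (u w : 'rV[R]_3) : R := \sum_(k < 3) u 0 k * w 0 k.

(* S is the vertex set of a face (of some dimension) of the convex hull:
   the set of vertices lying on a supporting plane. *)
Definition face_set (S : {set V}) : Prop :=
  exists (a : 'rV[R]_3) (c : R), a != 0 /\
    (forall i, dotv (p i) a <= c) /\ S = [set i | dotv (p i) a == c].

Definition is_face (S : {set V}) : Prop :=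
  face_set S /\ exists i j k, [/\ i \in S, j \in S, k \in S &
     \rank (col_mx (p j - p i) (p k - p i)) = 2%N].

Definition is_edge (S : {set V}) : Prop := face_set S /\ #|S| = 2%N.

(* p are the vertices of a strictly convex closed polyhedron: the boundary of a
   3-dimensional convex polytope whose vertices (extreme points) are exactly the
   p i, decomposed into its facets (so no dihedral angle equals pi). *)
Definition strictly_convex_polyhedron : Prop :=
  [/\ injective p,
      (forall i, face_set [set i]) &
      exists i j k l, \rank (col_mx (p j - p i) (col_mx (p k - p i) (p l - p i))) = 3%N].

Definition degree3 (i : V) : Prop :=
  exists j1 j2 j3, [/\ j1 != j2, j1 != j3, j2 != j3 &
    forall j, is_edge [set i; j] <-> (j = j1 \/ j = j2 \/ j = j3)].

Fixpoint edge_path (x : V) (s : seq V) : Prop :=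
  match s with
  | [::] => True
  | y :: s' => is_edge [set x; y] /\ edge_path y s'
  end.

End Polyhedra.

Definition affine_on (R : realType) (V V' : finType) (p : V -> 'rV[R]_3)
  (q : V' -> 'rV[R]_3) (f : V -> V') (S : {set V}) : Prop :=
  exists (M : 'M[R]_3) (b : 'rV[R]_3),
    M \in unitmx /\ forall i, i \in S -> q (f i) = p i *m M + b.

Definition comb_equiv (R : realType) (V V' : finType) (p : V -> 'rV[R]_3)
  (q : V' -> 'rV[R]_3) (f : V -> V') : Prop :=
  [/\ bijective f,
      (forall S, is_face p S <-> is_face q (f @: S)) &
      (forall S, is_edge p S <-> is_edge q (f @: S))].

(* Main.v *)
Require Import Defs.
From mathcomp Require Import all_boot all_order all_algebra.
From mathcomp Require Import reals.
Local Open Scope ring_scope.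
From HB Require Import structures.
From mathcomp Require Import all_boot all_order all_algebra.
From mathcomp Require Import reals.
From mathcomp Require Import ring lra.
From Stdlib Require Import Classical.
Set Implicit Arguments. Unset Strict Implicit. Unset Printing Implicit Defensive.
Import Order.TTheory GRing.Theory Num.Theory.
Local Open Scope ring_scope.

Section Vec.
Variable R : realType.
Local Notation vec := ('rV[R]_3).
Implicit Types (u v w a b c : vec) (k : R).

Definition i0 : 'I_3 := Ordinal (isT : (0 < 3)%N).
Definition i1 : 'I_3 := Ordinal (isT : (1 < 3)%N).
Definition i2 : 'I_3 := Ordinal (isT : (2 < 3)%N).

Lemma eq3 (u w : vec) : u 0 i0 = w 0 i0 -> u 0 i1 = w 0 i1 -> u 0 i2 = w 0 i2 -> u = w.
Proof.
move=> h0 h1 h2; apply/rowP => -[[|[|[|k]]] Hk] //.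
- by rewrite (_ : Ordinal Hk = i0) //; apply: val_inj.
- by rewrite (_ : Ordinal Hk = i1) //; apply: val_inj.
- by rewrite (_ : Ordinal Hk = i2) //; apply: val_inj.
Qed.

Lemma dotvE (u w : vec) : dotv u w = u 0 i0 * w 0 i0 + u 0 i1 * w 0 i1 + u 0 i2 * w 0 i2.
Proof.
rewrite /dotv !big_ord_recr big_ord0 /= add0r.
have e0 : widen_ord (leqnSn 2) (widen_ord (leqnSn 1) ord_max) = i0 by apply: val_inj.
have e1 : widen_ord (leqnSn 2) ord_max = i1 by apply: val_inj.
have e2 : ord_max = i2 by apply: val_inj.
by rewrite e0 e1 e2.
Qed.

Definition cross_def (u w : vec) : vec :=
  \row_(k < 3) (if val k == 0%N then u 0 i1 * w 0 i2 - u 0 i2 * w 0 i1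
                else if val k == 1%N then u 0 i2 * w 0 i0 - u 0 i0 * w 0 i2
                else u 0 i0 * w 0 i1 - u 0 i1 * w 0 i0).

Fact cross_key : unit. Proof. exact: tt. Qed.
Definition cross := locked_with cross_key cross_def.
Lemma cx0 u w : cross u w 0 i0 = u 0 i1 * w 0 i2 - u 0 i2 * w 0 i1.
Proof. by rewrite [cross]unlock mxE. Qed.
Lemma cx1 u w : cross u w 0 i1 = u 0 i2 * w 0 i0 - u 0 i0 * w 0 i2.
Proof. by rewrite [cross]unlock mxE. Qed.
Lemma cx2 u w : cross u w 0 i2 = u 0 i0 * w 0 i1 - u 0 i1 * w 0 i0.
Proof. by rewrite [cross]unlock mxE. Qed.

Ltac vt := rewrite ?dotvE ?mxE ?cx0 ?cx1 ?cx2 ?mxE ?cx0 ?cx1 ?cx2; ring.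

Lemma dotvC u w : dotv u w = dotv w u. Proof. vt. Qed.
Lemma dotvDl u v w : dotv (u + v) w = dotv u w + dotv v w. Proof. rewrite !dotvE !mxE; ring. Qed.
Lemma dotvDr u v w : dotv w (u + v) = dotv w u + dotv w v. Proof. rewrite !dotvE !mxE; ring. Qed.
Lemma dotvBl u v w : dotv (u - v) w = dotv u w - dotv v w. Proof. rewrite !dotvE !mxE; ring. Qed.
Lemma dotvBr u v w : dotv w (u - v) = dotv w u - dotv w v. Proof. rewrite !dotvE !mxE; ring. Qed.
Lemma dotvZl k u w : dotv (k *: u) w = k * dotv u w. Proof. rewrite !dotvE !mxE; ring. Qed.
Lemma dotvZr k u w : dotv w (k *: u) = k * dotv w u. Proof. rewrite !dotvE !mxE; ring. Qed.
Lemma dotvNr u w : dotv w (- u) = - dotv w u. Proof. rewrite !dotvE !mxE; ring. Qed.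
Lemma dotvNl u w : dotv (- u) w = - dotv u w. Proof. rewrite !dotvE !mxE; ring. Qed.
Lemma dotv0r u : dotv u 0 = 0. Proof. rewrite !dotvE !mxE; ring. Qed.
Lemma dotv0l u : dotv 0 u = 0. Proof. rewrite !dotvE !mxE; ring. Qed.

Lemma dotvv_ge0 u : 0 <= dotv u u.
Proof. rewrite dotvE; nra. Qed.

Lemma dotvv_eq0 u : dotv u u = 0 -> u = 0.
Proof.
rewrite dotvE => h.
have h0 : u 0 i0 = 0 by nra.
have h1 : u 0 i1 = 0 by nra.
have h2 : u 0 i2 = 0 by nra.
by apply: eq3; rewrite mxE.
Qed.

Lemma cross_dotl u w : dotv (cross u w) u = 0. Proof. vt. Qed.
Lemma cross_dotr u w : dotv (cross u w) w = 0. Proof. vt. Qed.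

Definition det3 a b c := dotv a (cross b c).

Lemma cramer (d1 d2 d3 w : vec) :
  det3 d1 d2 d3 *: w = det3 w d2 d3 *: d1 + det3 d1 w d3 *: d2 + det3 d1 d2 w *: d3.
Proof. by apply: eq3; rewrite /det3; vt. Qed.

Lemma cross_cross a b : cross a (cross a b) = dotv a b *: a - dotv a a *: b.
Proof. by apply: eq3; vt. Qed.

Lemma cross_cross2 a b c : cross (cross a b) c = dotv a c *: b - dotv b c *: a.
Proof. by apply: eq3; vt. Qed.

Lemma crossC a b : cross a b = - cross b a.
Proof. by apply: eq3; vt. Qed.

End Vec.

Section Vec2.
Variable R : realType.
Local Notation vec := ('rV[R]_3).
Implicit Types (u v w a b c : vec) (k : R).
Ltac vt := rewrite ?dotvE ?mxE ?cx0 ?cx1 ?cx2 ?mxE ?cx0 ?cx1 ?cx2; ring.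

Lemma cross0r a : cross a 0 = 0 :> vec. Proof. by apply: eq3; vt. Qed.
Lemma cross0l a : cross 0 a = 0 :> vec. Proof. by apply: eq3; vt. Qed.
Lemma det3_dot a b c : dotv (cross a b) c = det3 a b c. Proof. rewrite /det3; vt. Qed.
Lemma det3_swap23 a b c : det3 a c b = - det3 a b c. Proof. rewrite /det3; vt. Qed.
Lemma det3_cyc a b c : det3 b c a = det3 a b c. Proof. rewrite /det3; vt. Qed.

Lemma dotv_neq0 a : a != 0 -> dotv a a != 0.
Proof. by move=> h; apply/eqP => /dotvv_eq0 /eqP; rewrite (negbTE h). Qed.

Lemma dotv_gt0 a : a != 0 -> 0 < dotv a a.
Proof. by move=> h; rewrite lt_def dotv_neq0 // dotvv_ge0. Qed.

Lemma par a b : a != 0 -> cross a b = 0 -> b = (dotv a b / dotv a a) *: a.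
Proof.
move=> ha hc; have := cross_cross a b; rewrite hc cross0r => /eqP.
rewrite eq_sym subr_eq0 => /eqP h.
have hn := dotv_neq0 ha.
have -> : (dotv a b / dotv a a) *: a = (dotv a a)^-1 *: (dotv a b *: a) by rewrite scalerA mulrC.
by rewrite h scalerA mulVf // scale1r.
Qed.

Lemma cross_nz a : a != 0 -> exists z, cross a z != 0.
Proof.
move=> ha; apply: NNPP => H.
have e1 : cross a (\row_k (if val k == 0%N then 1 else 0)) = 0.
  by apply/eqP; apply/negPn/negP => hn; apply: H; eexists; exact: hn.
have e2 : cross a (\row_k (if val k == 1%N then 1 else 0)) = 0.
  by apply/eqP; apply/negPn/negP => hn; apply: H; eexists; exact: hn.
have := congr1 (fun m : vec => m 0 i1) e1; have := congr1 (fun m : vec => m 0 i2) e1.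
have := congr1 (fun m : vec => m 0 i0) e2; have := congr1 (fun m : vec => m 0 i2) e2.
rewrite ?cx0 ?cx1 ?cx2 !mxE /= => h1 h2 h3 h4.
move/eqP: ha; apply; apply: eq3; rewrite mxE; lra.
Qed.

Lemma dot_mx u w : u *m w^T = (dotv u w)%:M.
Proof.
apply/matrixP => i j; rewrite !ord1 !mxE /= mulr1n /dotv.
by apply: eq_bigr => k _; rewrite !mxE.
Qed.

End Vec2.

Section Vec3.
Variable R : realType.
Local Notation vec := ('rV[R]_3).

Lemma coef_nonneg (d1 d2 d3 be w : vec) : det3 d1 d2 d3 != 0 -> be != 0 ->
  dotv d2 be = 0 -> dotv d3 be = 0 -> dotv d1 be <= 0 -> dotv w be <= 0 ->
  0 <= det3 w d2 d3 * det3 d1 d2 d3.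
Proof.
move=> hD hb h2 h3 h1 hw.
have cr : forall z : vec, det3 d1 d2 d3 * dotv z be = det3 z d2 d3 * dotv d1 be.
  move=> z; have := congr1 (fun v => dotv v be) (cramer d1 d2 d3 z).
  by rewrite /= !dotvDl !dotvZl h2 h3 !mulr0 !addr0.
have h1' : dotv d1 be < 0.
  rewrite lt_neqAle h1 andbT; apply/eqP => e.
  have := cr be; rewrite e mulr0 => /eqP; rewrite mulf_eq0 (negbTE hD) /= => /eqP.
  by move/dotvv_eq0 => e'; move: hb; rewrite e' eqxx.
have := cr w; set D := det3 d1 d2 d3; set X := det3 w d2 d3 => e.
have : X * D * dotv d1 be = D ^+ 2 * dotv w be.
  by transitivity (D * (X * dotv d1 be)); [ring | rewrite -e; ring].
move=> e2; have := sqr_ge0 D; nra.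
Qed.

Lemma rank_par (a b : R) (m : vec) : (\rank (col_mx (a *: m) (b *: m)) <= 1)%N.
Proof.
have -> : col_mx (a *: m) (b *: m) = col_mx (a%:M : 'M_1) (b%:M : 'M_1) *m m.
  by rewrite mul_col_mx !mul_scalar_mx.
by apply: leq_trans (mxrankM_maxr _ _) (rank_leq_row _).
Qed.

Lemma rank2 (u w : vec) : cross u w != 0 -> \rank (col_mx u w) = 2%N.
Proof.
move=> hn; set n := cross u w.
have nn := dotv_neq0 hn.
apply/eqP; rewrite eqn_leq rank_leq_row /=.
have : row_free (col_mx u w).
  apply/row_freeP; exists (row_mx ((dotv n n)^-1 *: cross w n)^T ((dotv n n)^-1 *: cross n u)^T).
  rewrite mul_col_row !dot_mx !dotvZr.
  have e1 : dotv u (cross w n) = dotv n n.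
    by rewrite /n !dotvE ?cx0 ?cx1 ?cx2 ?cx0 ?cx1 ?cx2; ring.
  have e2 : dotv w (cross n u) = dotv n n.
    by rewrite /n !dotvE ?cx0 ?cx1 ?cx2 ?cx0 ?cx1 ?cx2; ring.
  have e3 : dotv w (cross w n) = 0 by rewrite dotvC cross_dotl.
  have e4 : dotv u (cross n u) = 0 by rewrite dotvC cross_dotr.
  have z0 : (0%:M : 'M[R]_1) = 0 by apply/matrixP => i j; rewrite !mxE mul0rn.
  by rewrite e1 e2 e3 e4 !mulr0 mulVf // z0 -scalar_mx_block.
by rewrite /row_free => /eqP ->.
Qed.

End Vec3.


Section Sweep.
Variable R : realType.
Local Notation vec := ('rV[R]_3).
Variable I : finType.

Lemma sweep (P : pred I) (g : I -> vec) (a c : vec) :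
  (forall i, P i -> dotv (g i) a <= 0) ->
  (forall i, P i -> dotv (g i) a = 0 -> dotv (g i) c <= 0) ->
  (exists i, P i /\ 0 < dotv (g i) c) ->
  exists s : R, [/\ 0 < s, s < 1,
    (forall i, P i -> dotv (g i) ((1 - s) *: a + s *: c) <= 0) &
    exists i, [/\ P i, dotv (g i) a < 0 & dotv (g i) ((1 - s) *: a + s *: c) = 0]].
Proof.
move=> ha h0 [i0 [Pi0 ci0]].
pose T := fun i => P i && (0 < dotv (g i) c).
have Ti0 : T i0 by rewrite /T Pi0 ci0.
pose F := fun i => dotv (g i) a / (dotv (g i) a - dotv (g i) c).
have Tneg : forall i, T i -> dotv (g i) a < 0.
  move=> i /andP [Pi ci]; rewrite lt_neqAle ha // andbT; apply/eqP => e.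
  by have := h0 i Pi e; rewrite leNgt ci.
have TF : forall i, T i -> F i * (dotv (g i) a - dotv (g i) c) = dotv (g i) a.
  move=> i Ti; rewrite /F divfK //; have := Tneg i Ti; move: Ti => /andP [_ ci].
  by move=> hh; apply/eqP => e; move: e; lra.
case: (@arg_minP _ R I i0 T F Ti0) => i Ti Hmin.
have lin : forall j, dotv (g j) ((1 - F i) *: a + F i *: c)
   = (1 - F i) * dotv (g j) a + F i * dotv (g j) c.
  by move=> j; rewrite dotvDr !dotvZr.
have ai := Tneg i Ti; have := TF i Ti; move: Ti => /andP [Pi ci] => Fi.
have Fpos : 0 < F i by nra.
have Flt1 : F i < 1 by nra.
exists (F i); split => //.
- move=> j Pj; rewrite lin.
  have aj := ha j Pj.
  case: (lerP (dotv (g j) c) 0) => cj; first by nra.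
  have Tj : T j by rewrite /T Pj cj.
  have := Hmin j Tj; have := TF j Tj => Fj Hle.
  have aj' := Tneg j Tj.
  nra.
- exists i; split => //; rewrite lin; nra.
Qed.
End Sweep.

Section Geo.
Variable R : realType.
Local Notation vec := ('rV[R]_3).
Variable V : finType.
Variable p : V -> vec.
Hypothesis hinj : injective p.
Hypothesis hexp : forall i, face_set p [set i].
Hypothesis hspan : forall x (b : vec), (forall j, dotv (p j - p x) b = 0) -> b = 0.

Local Notation W x j := (p j - p x).

Lemma face_fun S : face_set p S -> exists (a : vec) (c : R),
  [/\ a != 0, forall i, dotv (p i) a <= c & forall i, i \in S <-> dotv (p i) a = c].
Proof.
move=> [a [c [ha [hle hS]]]]; exists a, c; split => // i.
by rewrite hS inE; split => [/eqP|->].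
Qed.

Lemma face_funW S x : face_set p S -> x \in S -> exists (a : vec),
  [/\ a != 0, forall j, dotv (W x j) a <= 0 & forall j, j \in S <-> dotv (W x j) a = 0].
Proof.
move=> /face_fun [a [c [ha hle hS]]] xS; exists a; split => //.
- by move=> j; rewrite dotvBl (proj1 (hS x) xS) subr_le0.
- move=> j; rewrite dotvBl (proj1 (hS x) xS) hS; split => [->|/eqP]; first by rewrite subrr.
  by rewrite subr_eq0 => /eqP.
Qed.

Lemma expose x : exists a : vec, forall j, j != x -> dotv (W x j) a < 0.
Proof.
have [a [ha hle hS]] := face_funW (hexp x) (set11 x).
exists a => j hj; rewrite lt_neqAle hle andbT; apply/eqP => /hS.
by rewrite inE (negbTE hj).
Qed.

Lemma span_nz x (a : vec) : a != 0 -> exists j, dotv (W x j) a != 0.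
Proof.
move=> ha; apply: NNPP => H; move/eqP: ha; apply; apply: (hspan (x := x)) => j.
by apply/eqP; apply/negPn/negP => hn; apply: H; exists j.
Qed.

Lemma lift x (be ga : vec) :
  (forall j, dotv (W x j) be <= 0) ->
  (forall j, dotv (W x j) be = 0 -> dotv (W x j) ga <= 0) ->
  exists G : vec, (forall j, dotv (W x j) G <= 0) /\
    (forall j, dotv (W x j) G = 0 <-> dotv (W x j) be = 0 /\ dotv (W x j) ga = 0).
Proof.
move=> hb hg.
pose lam := 1 + \sum_j `|dotv (W x j) ga| / `|dotv (W x j) be|.
have hl : forall j, dotv (W x j) be != 0 ->
    `|dotv (W x j) ga| / `|dotv (W x j) be| + 1 <= lam.
  move=> j _; rewrite /lam addrC lerD2l (bigD1 j) //= lerDl.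
  by apply: sumr_ge0 => i _; rewrite divr_ge0.
exists (ga + lam *: be); split.
- move=> j; rewrite dotvDr dotvZr.
  have bj := hb j.
  case: (eqVneq (dotv (W x j) be) 0) => e; first by rewrite e mulr0 addr0 hg.
  have := hl j e; set B := dotv (W x j) be; set C := dotv (W x j) ga => hlj.
  have Bneg : B < 0 by rewrite lt_neqAle e bj.
  have hB : `|B| = - B by rewrite ltr0_norm.
  have : `|C| / `|B| * `|B| = `|C| by rewrite divfK // normr_eq0.
  move=> hC; have := ler_norm C.
  have hp : 0 <= (lam - (`|C| / `|B| + 1)) * (- B).
    by apply: mulr_ge0; rewrite ?subr_ge0 // oppr_ge0 ltW.
  move: hp hC hlj; set Q := `|C| / `|B|; rewrite hB; nra.
- move=> j; rewrite dotvDr dotvZr; split; last by case=> -> ->; rewrite mulr0 addr0.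
  have bj := hb j.
  case: (eqVneq (dotv (W x j) be) 0) => e; first by rewrite e mulr0 addr0.
  have := hl j e; set B := dotv (W x j) be; set C := dotv (W x j) ga => hlj.
  have Bneg : B < 0 by rewrite lt_neqAle e bj.
  have hB : `|B| = - B by rewrite ltr0_norm.
  have : `|C| / `|B| * `|B| = `|C| by rewrite divfK // normr_eq0.
  move=> hC; have := ler_norm C.
  have hp : 0 <= (lam - (`|C| / `|B| + 1)) * (- B).
    by apply: mulr_ge0; rewrite ?subr_ge0 // oppr_ge0 ltW.
  move: hp hC hlj; set Q := `|C| / `|B|; rewrite hB; nra.
Qed.


Lemma nb x k l (th : R) : k != x -> l != k -> W x k = th *: W x l -> 0 < th -> th < 1 -> False.
Proof.
move=> kx lk hW h0 h1.
have [a [ha hle hS]] := face_funW (hexp k) (set11 k).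
have Dk : dotv (W k x) a < 0.
  by rewrite lt_neqAle hle andbT; apply/eqP => /hS; rewrite inE eq_sym (negbTE kx).
have El : dotv (W k l) a < 0.
  by rewrite lt_neqAle hle andbT; apply/eqP => /hS; rewrite inE (negbTE lk).
have e1 : dotv (W x k) a = - dotv (W k x) a by rewrite -dotvNl opprB.
have e2 : dotv (W x l) a = dotv (W k l) a - dotv (W k x) a.
  by rewrite -dotvBl; congr dotv; rewrite opprB addrA subrK.
have := congr1 (fun z => dotv z a) hW; rewrite /= dotvZl e1 e2; nra.
Qed.

Lemma edge_of x (G m : vec) j1 : G != 0 -> (forall j, dotv (W x j) G <= 0) ->
  j1 != x -> dotv (W x j1) G = 0 ->
  (forall j, dotv (W x j) G = 0 -> exists t : R, W x j = t *: m) ->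
  is_edge p [set x; j1].
Proof.
move=> hG hle j1x hj1 hm.
have [a0 ha0] := expose x.
have key : forall i, i != x -> dotv (W x i) G = 0 -> i = j1.
  move=> i ix hi; apply: NNPP => ij.
  have [t ht] := hm i hi; have [t1 ht1] := hm j1 hj1.
  have hi0 := ha0 i ix; have hj0 := ha0 j1 j1x.
  rewrite ht dotvZl in hi0; rewrite ht1 dotvZl in hj0.
  have tt1 : 0 < t * t1 by nra.
  case: (ltrgtP (t ^+ 2) (t1 ^+ 2)) => hc.
  - have t1n : t1 != 0 by apply/eqP => e; move: tt1; rewrite e mulr0 ltxx.
    apply: (@nb x i j1 (t / t1)) => //; first by apply/eqP => e; apply: ij; rewrite e.
    + by rewrite ht ht1 scalerA divfK.
    + have e : t / t1 * t1 = t by rewrite divfK.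
      move: e; set th := t / t1 => e; nra.
    + have e : t / t1 * t1 = t by rewrite divfK.
      move: e; set th := t / t1 => e; nra.
  - have tn : t != 0 by apply/eqP => e; move: tt1; rewrite e mul0r ltxx.
    apply: (@nb x j1 i (t1 / t)) => //; first by apply/eqP => e; apply: ij; rewrite e.
    + by rewrite ht ht1 scalerA divfK.
    + have e : t1 / t * t = t1 by rewrite divfK.
      move: e; set th := t1 / t => e; nra.
    + have e : t1 / t * t = t1 by rewrite divfK.
      move: e; set th := t1 / t => e; nra.
  - have : t = t1 \/ t = - t1.
      by move/eqP: hc; rewrite -subr_eq0 subr_sqr mulf_eq0 subr_eq0 addr_eq0 => /orP [] /eqP; [left|right].
    case=> e.
    + apply: ij; apply: hinj; have H : W x i = W x j1 by rewrite ht ht1 e.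
      by have := congr1 (fun z => z + p x) H; rewrite /= !subrK.
    + by move: tt1; rewrite e; nra.
split.
- exists G, (dotv (p x) G); split => //; split.
  + by move=> i; have := hle i; rewrite dotvBl subr_le0.
  + apply/setP => i; rewrite !inE; apply/idP/idP.
    * case/orP => /eqP ->; first by [].
      by rewrite -subr_eq0 -dotvBl hj1.
    * move=> /eqP e; have eq : dotv (W x i) G = 0 by rewrite dotvBl e subrr.
      case: (eqVneq i x) => [->|ix] //=.
      by rewrite (key i ix eq) eqxx.
- by rewrite cards2 eq_sym j1x.
Qed.


Lemma edge_fun x y : is_edge p [set x; y] -> y != x /\ exists b : vec,
  [/\ b != 0, forall j, dotv (W x j) b <= 0 & forall j, dotv (W x j) b = 0 <-> j = x \/ j = y].
Proof.
move=> [hf hc]; split; first by move: hc; rewrite cards2 eq_sym; case: (y != x).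
have [b [hb hle hS]] := face_funW hf (set21 x y).
exists b; split => // j; rewrite -hS !inE; split; first by case/orP => /eqP; [left|right].
by case=> ->; rewrite eqxx ?orbT.
Qed.

Definition flike x (b be : vec) y := [/\ be != 0, (forall j, dotv (W x j) be <= 0),
  dotv (W x y) be = 0 & exists j, dotv (W x j) b < 0 /\ dotv (W x j) be = 0].

Lemma two_facets x y (b : vec) : y != x -> b != 0 -> (forall j, dotv (W x j) b <= 0) ->
  (forall j, dotv (W x j) b = 0 <-> j = x \/ j = y) ->
  exists bp bm, [/\ flike x b bp y, flike x b bm y &
     forall v, dotv v bp = 0 -> dotv v bm = 0 -> cross (W x y) v = 0].
Proof.
move=> yx hb hle hS.
set d := W x y.
have dnz : d != 0.
  by apply/eqP => e; move/eqP: yx; apply; apply: hinj; have := congr1 (fun z => z + p x) e; rewrite /= subrK add0r.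
have db : dotv d b = 0 by apply/hS; right.
set u := cross d b.
have ud : dotv d u = 0 by rewrite dotvC cross_dotl.
have ub : dotv b u = 0 by rewrite dotvC cross_dotr.
have unz : u != 0.
  apply/eqP => e.
  have : cross b d = 0 by rewrite crossC -/u e oppr0.
  move/(par hb); rewrite dotvC db mul0r scale0r => /eqP; by rewrite (negbTE dnz).
have [j0 hj0] := span_nz x hb.
have bj0 : dotv (W x j0) b < 0 by rewrite lt_neqAle hj0 hle.
set U := dotv (W x j0) u.
set lam := - dotv (W x j0) b / (`|U| + 1).
have hU1 : 0 < `|U| + 1 by rewrite ltr_pwDr // normr_ge0.
have lamE : lam * (`|U| + 1) = - dotv (W x j0) b by rewrite divfK // gt_eqF.
have lam0 : 0 < lam by rewrite divr_gt0 // oppr_gt0.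
have Ule := ler_norm U; have Ule' : - U <= `|U| by rewrite -normrN ler_norm.
have h1 : 0 <= lam * (`|U| + U) by apply: mulr_ge0; [exact: ltW | lra].
have h2 : 0 <= lam * (`|U| - U) by apply: mulr_ge0; [exact: ltW | lra].
have mk : forall sg : R, sg = 1 \/ sg = -1 -> exists s : R, [/\ 0 < s, s < 1,
    flike x b ((1 - s) *: b + s *: (- b + (sg * lam) *: u)) y &
    (1 - s) *: b + s *: (- b + (sg * lam) *: u) = (1 - 2 * s) *: b + (s * sg * lam) *: u].
  move=> sg hsg'.
  have := @sweep R V predT (fun j => W x j) b (- b + (sg * lam) *: u) (fun j _ => hle j).
  case.
  - move=> j _ /hS [->|->]; first by rewrite subrr dotv0l.
    by rewrite dotvDr dotvNr db dotvZr ud mulr0 oppr0 addr0.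
  - exists j0; split => //; rewrite dotvDr dotvNr dotvZr -/U.
    by case: hsg' => ->; rewrite ?mul1r ?mulN1r; nra.
  move=> s [s0 s1 hs [j [_ hj1 hj2]]].
  have E : (1 - s) *: b + s *: (- b + (sg * lam) *: u) = (1 - 2 * s) *: b + (s * sg * lam) *: u.
    by apply: eq3; rewrite !mxE; ring.
  exists s; split => //; split.
  + rewrite E; apply/eqP => e.
    have := congr1 (fun z => dotv u z) e; rewrite /= dotvDr !dotvZr (dotvC u b) ub dotv0r mulr0 add0r.
    move=> h0; have := dotv_gt0 unz; case: hsg' => esg; rewrite esg in h0 => hh.
    + have : 0 < s * 1 * lam * dotv u u by rewrite mulr1; apply: mulr_gt0 => //; apply: mulr_gt0.
      by rewrite h0 ltxx.
    + have : 0 < s * 1 * lam * dotv u u by rewrite mulr1; apply: mulr_gt0 => //; apply: mulr_gt0.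
      by move: h0; rewrite mulrN1 !mulNr mulr1 => /eqP; rewrite oppr_eq0 => /eqP ->; rewrite ltxx.
  + by move=> i; exact: hs.
  + rewrite E dotvDr !dotvZr db ud; ring.
  + by exists j.
have [sp [sp0 sp1 fp Ep]] := mk 1 (or_introl erefl).
have [sm [sm0 sm1 fm Em]] := mk (-1) (or_intror erefl).
exists ((1 - sp) *: b + sp *: (- b + (1 * lam) *: u)), ((1 - sm) *: b + sm *: (- b + (-1 * lam) *: u)).
split => // v hvp hvm; rewrite Ep in hvp fp; rewrite Em in hvm fm.
apply: NNPP => /eqP nnz.
set n := cross d v in nnz.
have cpar : forall be : vec, dotv d be = 0 -> dotv v be = 0 -> be = (dotv n be / dotv n n) *: n.
  move=> be g1 g2; apply: par => //.
  by rewrite cross_cross2 g1 g2 !scale0r subrr.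
case: fp => _ hlp hdp _; case: fm => _ hlm hdm _.
have Hp := cpar _ hdp hvp; have Hm := cpar _ hdm hvm.
set kp := dotv n ((1 - 2 * sp) *: b + (sp * 1 * lam) *: u) / dotv n n in Hp.
set km := dotv n ((1 - 2 * sm) *: b + (sm * -1 * lam) *: u) / dotv n n in Hm.
have uu := dotv_gt0 unz.
have hup : 0 < kp * dotv u n.
  have := congr1 (fun z => dotv u z) Hp; rewrite /= dotvZr dotvDr !dotvZr (dotvC u b) ub => <-.
  rewrite mulr0 add0r; apply: mulr_gt0 => //; nra.
have hum : kp * km < 0.
  have := congr1 (fun z => dotv u z) Hm; rewrite /= dotvZr dotvDr !dotvZr (dotvC u b) ub.
  rewrite mulr0 add0r => hm'.
  have pos : 0 < sm * lam * dotv u u by apply: mulr_gt0 => //; apply: mulr_gt0.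
  have e1 : sm * -1 * lam * dotv u u = - (sm * lam * dotv u u) by ring.
  have kmn : km * dotv u n < 0 by lra.
  have pr : (kp * dotv u n) * (km * dotv u n) < 0 by rewrite pmulr_rlt0.
  have e2 : (kp * dotv u n) * (km * dotv u n) = (kp * km) * (dotv u n) ^+ 2 by ring.
  rewrite ltNge; apply/negP => h; have := mulr_ge0 h (sqr_ge0 (dotv u n)); lra.
move/eqP: nnz; apply; apply: (hspan (x := x)) => j.
have := hlp j; have := hlm j; rewrite {1}Hm {1}Hp !dotvZr => a1 a2.
have hh := mulr_le0 a2 a1.
have e2 : (kp * dotv (W x j) n) * (km * dotv (W x j) n) = (kp * km) * (dotv (W x j) n) ^+ 2 by ring.
apply/eqP; rewrite -sqrf_eq0 eq_le sqr_ge0 andbT; nra.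
Qed.


Lemma Wxx x : W x x = 0. Proof. by rewrite subrr. Qed.

Lemma W_neq0 x y : y != x -> W x y != 0.
Proof.
move=> yx; apply/eqP => e; move/eqP: yx; apply; apply: hinj.
by have := congr1 (fun z => z + p x) e; rewrite /= subrK add0r.
Qed.

Lemma second_edge x y (b be : vec) : y != x -> b != 0 -> (forall j, dotv (W x j) b <= 0) ->
  (forall j, dotv (W x j) b = 0 <-> j = x \/ j = y) -> flike x b be y ->
  exists j', [/\ j' != x, j' != y, is_edge p [set x; j'] & dotv (W x j') be = 0].
Proof.
move=> yx hb hle hS [ben hbe hbey [jw [jw1 jw2]]].
have [a0 ha0] := expose x.
have ha0' : forall j, dotv (W x j) a0 <= 0.
  by move=> j; case: (eqVneq j x) => [->|jx]; [rewrite Wxx dotv0l | exact/ltW/ha0].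
have := @sweep R V (fun j => dotv (W x j) be == 0) (fun j => W x j) a0 (- b) (fun j _ => ha0' j).
case.
- move=> j _ e; case: (eqVneq j x) => [->|jx]; first by rewrite Wxx dotv0l.
  by move: (ha0 j jx); rewrite e ltxx.
- by exists jw; split; [apply/eqP | rewrite dotvNr oppr_gt0].
move=> s [s0 s1 hs [j' [/eqP Pj' aj' gj']]].
set ga := (1 - s) *: a0 + s *: - b in hs gj'.
have gd : dotv (W x y) ga < 0.
  rewrite /ga dotvDr !dotvZr dotvNr (proj2 (hS y) (or_intror erefl)) oppr0 mulr0 addr0.
  by rewrite pmulr_rlt0 ?subr_gt0 // ha0.
have [G [hG hGiff]] := lift hbe (fun j e => hs j (introT eqP e)).
have Gnz : G != 0.
  apply/eqP => e; have := proj1 (hGiff y); rewrite e dotv0r => /(_ erefl) [_ h].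
  by move: gd; rewrite h ltxx.
have j'x : j' != x by apply/eqP => e; move: aj'; rewrite e Wxx dotv0l ltxx.
set m := cross be ga.
have mnz : m != 0.
  apply/eqP => /(par ben) e; move: gd; rewrite e dotvZr hbey mulr0 ltxx.
  by [].
exists j'; split => //.
- by apply/eqP => e; move: gd; rewrite -e gj' ltxx.
- apply: (edge_of (G := G) (m := m)) => //; first by apply/hGiff.
  move=> j /hGiff [e1 e2]; exists (dotv m (W x j) / dotv m m); apply: par => //.
  by rewrite /m cross_cross2 (dotvC be) (dotvC ga) e1 e2 !scale0r subrr.
Qed.


Lemma nonpar x y z : is_edge p [set x; y] -> is_edge p [set x; z] -> z != y ->
  cross (W x y) (W x z) != 0.
Proof.
move=> /edge_fun [yx [b [hb hle hS]]] /edge_fun [zx _] zy; apply/eqP => /(par (W_neq0 yx)) e.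
have : dotv (W x z) b = 0 by rewrite e dotvZl (proj2 (hS y) (or_intror erefl)) mulr0.
by case/hS => e'; [move: zx | move: zy]; rewrite e' eqxx.
Qed.

Definition ffun x (be : vec) k l := [/\ be != 0, (forall j, dotv (W x j) be <= 0),
  dotv (W x k) be = 0 & dotv (W x l) be = 0].

Lemma deg3_a x ya yb yc : ya != yb -> ya != yc -> yb != yc ->
  (forall j, is_edge p [set x; j] <-> j = ya \/ j = yb \/ j = yc) ->
  [/\ det3 (W x ya) (W x yb) (W x yc) != 0,
      exists be, ffun x be ya yb & exists be, ffun x be ya yc].
Proof.
move=> dab dac dbc hdeg.
have ea : is_edge p [set x; ya] by apply/hdeg; left.
have [yax [b [hb hle hS]]] := edge_fun ea.
have [bp [bm [fp fm nc]]] := two_facets yax hb hle hS.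
have [jp [jpx jpa ejp vjp]] := second_edge yax hb hle hS fp.
have [jm [jmx jma ejm vjm]] := second_edge yax hb hle hS fm.
have npp := nonpar ea ejp jpa; have npm := nonpar ea ejm jma.
have jpm : jm != jp.
  apply/eqP => e; move: vjm; rewrite e => vjm'.
  by move/eqP: npp; apply; apply: nc.
have Dn : det3 (W x ya) (W x jp) (W x jm) != 0.
  apply/eqP => D0.
  case: fp => bpn hlp vap _.
  have := par npp (_ : cross (cross (W x ya) (W x jp)) bp = 0).
  rewrite cross_cross2 vap vjp !scale0r subrr => /(_ erefl) e.
  move/eqP: npm; apply; apply: nc => //.
  by rewrite e dotvZr (dotvC (W x jm)) (det3_dot _ _ (W x jm)) D0 mulr0.
have cases : (jp = yb /\ jm = yc) \/ (jp = yc /\ jm = yb).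
  move/hdeg: ejp => [e|[e|e]]; first by move: jpa; rewrite e eqxx.
  - move/hdeg: ejm => [e'|[e'|e']]; first by move: jma; rewrite e' eqxx.
    + by move: jpm; rewrite e e' eqxx.
    + by left.
  - move/hdeg: ejm => [e'|[e'|e']]; first by move: jma; rewrite e' eqxx.
    + by right.
    + by move: jpm; rewrite e e' eqxx.
case: fp => bpn hlp vap _; case: fm => bmn hlm vam _.
case: cases => [[e1 e2]|[e1 e2]]; rewrite e1 e2 in Dn vjp vjm.
- split => //; [exists bp | exists bm]; by split.
- split; first by rewrite det3_swap23 oppr_eq0.
  + by exists bm; split.
  + by exists bp; split.
Qed.


Lemma two_in_face x ya yb yc (bab bac bbc : vec) F :
  det3 (W x ya) (W x yb) (W x yc) != 0 -> ffun x bab ya yb -> ffun x bac ya yc ->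
  ffun x bbc yb yc -> is_face p F -> x \in F -> yb \in F \/ yc \in F.
Proof.
move=> hD [n1 l1 a1 b1] [n2 l2 a2 c2] [n3 l3 b3 c3] [hface [i [j [k [iF jF kF rk]]]]] xF.
have ca : forall z, 0 <= det3 (W x z) (W x yb) (W x yc) * (det3 (W x ya) (W x yb) (W x yc)).
  by move=> z; apply: (coef_nonneg (be := bbc)) => //.
have cb : forall z, 0 <= det3 (W x z) (W x yc) (W x ya) * (det3 (W x ya) (W x yb) (W x yc)).
  by move=> z; rewrite -(det3_cyc (W x ya)); apply: (coef_nonneg (be := bac)) => //; rewrite det3_cyc.
have cc : forall z, 0 <= det3 (W x z) (W x ya) (W x yb) * (det3 (W x ya) (W x yb) (W x yc)).
  by move=> z; rewrite -(det3_cyc (W x ya)) -(det3_cyc (W x yb)); apply: (coef_nonneg (be := bab)) => //; rewrite det3_cyc det3_cyc.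
have [aF [aFn aFle aFS]] := face_funW hface xF.
apply: NNPP => H.
have nb : yb \notin F by apply/negP => h; apply: H; left.
have nc : yc \notin F by apply/negP => h; apply: H; right.
have bneg : dotv (W x yb) aF < 0.
  by rewrite lt_neqAle aFle andbT; apply/eqP => /aFS; apply/negP.
have cneg : dotv (W x yc) aF < 0.
  by rewrite lt_neqAle aFle andbT; apply/eqP => /aFS; apply/negP.
have col : forall z, z \in F -> W x z = (det3 (W x z) (W x yb) (W x yc) / (det3 (W x ya) (W x yb) (W x yc))) *: (W x ya).
  move=> z zF; have hz := proj1 (aFS z) zF.
  have cr := cramer (W x ya) (W x yb) (W x yc) (W x z).
  have := congr1 (fun v => dotv v aF) cr; rewrite /= !dotvDl !dotvZl hz mulr0.
  rewrite -(det3_cyc (W x ya) (W x z)) (det3_cyc (W x z)).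
  move=> e.
  have hca := ca z; have hcb := cb z; have hcc := cc z; have := aFle ya; move=> hla.
  have e' : 0 = det3 (W x z) (W x yb) (W x yc) * (det3 (W x ya) (W x yb) (W x yc)) * dotv (W x ya) aF + det3 (W x z) (W x yc) (W x ya) * (det3 (W x ya) (W x yb) (W x yc)) * dotv (W x yb) aF
              + det3 (W x z) (W x ya) (W x yb) * (det3 (W x ya) (W x yb) (W x yc)) * dotv (W x yc) aF.
    by transitivity ((det3 (W x ya) (W x yb) (W x yc)) * 0); [ring | rewrite e; ring].
  have t1 : det3 (W x z) (W x yc) (W x ya) * (det3 (W x ya) (W x yb) (W x yc)) * dotv (W x yb) aF = 0 by nra.
  have t2 : det3 (W x z) (W x ya) (W x yb) * (det3 (W x ya) (W x yb) (W x yc)) * dotv (W x yc) aF = 0 by nra.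
  have z1 : det3 (W x z) (W x yc) (W x ya) = 0.
    by move/eqP: t1; rewrite !mulf_eq0 (negbTE hD) (lt_eqF bneg) !orbF => /eqP.
  have z2 : det3 (W x z) (W x ya) (W x yb) = 0.
    by move/eqP: t2; rewrite !mulf_eq0 (negbTE hD) (lt_eqF cneg) !orbF => /eqP.
  move: cr; rewrite -(det3_cyc (W x ya) (W x z)) z1 (det3_cyc (W x z)) z2.
  rewrite !scale0r !addr0 => cr.
  have := congr1 (fun v => (det3 (W x ya) (W x yb) (W x yc))^-1 *: v) cr.
  by rewrite /= scalerA mulVf // scale1r scalerA mulrC.
have : (\rank (col_mx (p j - p i) (p k - p i)) <= 1)%N.
  have -> : p j - p i = W x j - W x i by rewrite opprB addrA subrK.
  have -> : p k - p i = W x k - W x i by rewrite opprB addrA subrK.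
  by rewrite (col _ jF) (col _ iF) (col _ kF) -!scalerBl rank_par.
by rewrite rk.
Qed.


Lemma face_of v (be : vec) k l : be != 0 -> (forall j, dotv (W v j) be <= 0) ->
  dotv (W v k) be = 0 -> dotv (W v l) be = 0 -> cross (W v k) (W v l) != 0 ->
  exists F, [/\ is_face p F, v \in F, k \in F & l \in F].
Proof.
move=> bn hle hk hl hc.
have mem : forall j, (j \in [set j | dotv (p j) be == dotv (p v) be]) = (dotv (W v j) be == 0).
  by move=> j; rewrite inE dotvBl subr_eq0.
exists [set j | dotv (p j) be == dotv (p v) be]; split.
- split; last by exists v, k, l; split; rewrite ?mem ?Wxx ?dotv0l ?hk ?hl //; apply: rank2.
  exists be, (dotv (p v) be); split => //; split => // i.
  by have := hle i; rewrite dotvBl subr_le0.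
- by rewrite inE.
- by rewrite mem hk.
- by rewrite mem hl.
Qed.

Lemma every_vertex_in_face v : exists F, is_face p F /\ v \in F.
Proof.
have [a0 [a0n a0le a0S]] := face_funW (hexp v) (set11 v).
have ha0 : forall j, j != v -> dotv (W v j) a0 < 0.
  by move=> j jv; rewrite lt_neqAle a0le andbT; apply/eqP => /a0S; rewrite inE (negbTE jv).
have [z hz] := cross_nz a0n.
set u0 := cross a0 z.
have [j1 hj1] := span_nz v hz.
set u := dotv (W v j1) u0 *: u0.
have au : dotv a0 u = 0 by rewrite /u dotvZr (dotvC a0) cross_dotl mulr0.
have := @sweep R V predT (fun j => W v j) a0 u (fun j _ => a0le j).
case.
- move=> j _ e; case: (eqVneq j v) => [->|jv]; first by rewrite Wxx dotv0l.
  by move: (ha0 j jv); rewrite e ltxx.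
- exists j1; split => //; rewrite /u dotvZr.
  by rewrite lt_def -expr2 sqr_ge0 andbT expf_eq0 /= hj1.
move=> s [s0 s1 hs [js [_ ajs bjs]]].
set be := (1 - s) *: a0 + s *: u in hs bjs.
have jsv : js != v by apply/eqP => e; move: ajs; rewrite e Wxx dotv0l ltxx.
have ben : be != 0.
  apply/eqP => e; have := congr1 (fun w => dotv a0 w) e.
  rewrite /= /be dotvDr !dotvZr (dotvC a0 u0) cross_dotl !mulr0 addr0 dotv0r => /eqP; rewrite mulf_eq0.
  by rewrite subr_eq0 (gt_eqF s1) (negbTE (dotv_neq0 a0n)).
have hle : forall j, dotv (W v j) be <= 0 by move=> j; exact: hs.
case: (boolP [exists k, (dotv (W v k) be == 0) && (cross (W v js) (W v k) != 0)]).
- move=> /existsP [k /andP [/eqP hk hc]].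
  by have [F [hF vF _ _]] := face_of ben hle bjs hk hc; exists F.
- move=> /existsPn hall.
  have dnz := W_neq0 jsv.
  have ed : is_edge p [set v; js].
    apply: (edge_of (G := be) (m := W v js)) => // j hj; eexists; apply: par => //.
    by have := hall j; rewrite hj eqxx /= negbK => /eqP.
  have [_ [b [bn ble bS]]] := edge_fun ed.
  have [bp [bm [[bpn bple bpd [j [bj bpj]]] _ _]]] := two_facets jsv bn ble bS.
  have hc : cross (W v js) (W v j) != 0.
    apply/eqP => /(par dnz) e; move: bj; rewrite e dotvZl (proj2 (bS js) (or_intror erefl)) mulr0 ltxx.
    by [].
  by have [F [hF vF _ _]] := face_of bpn bple bpd bpj hc; exists F.
Qed.


Lemma ffun_sym x be k l : ffun x be k l -> ffun x be l k.
Proof. by case. Qed.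

Lemma deg3_full x ya yb yc : ya != yb -> ya != yc -> yb != yc ->
  (forall j, is_edge p [set x; j] <-> j = ya \/ j = yb \/ j = yc) ->
  [/\ det3 (W x ya) (W x yb) (W x yc) != 0,
      exists F, [/\ is_face p F, x \in F, ya \in F & yb \in F],
      exists F, [/\ is_face p F, x \in F, ya \in F & yc \in F],
      exists F, [/\ is_face p F, x \in F, yb \in F & yc \in F] &
      forall F, is_face p F -> x \in F ->
        [/\ ya \in F \/ yb \in F, ya \in F \/ yc \in F & yb \in F \/ yc \in F]].
Proof.
move=> dab dac dbc hdeg.
have [hD [bab fab] [bac fac]] := deg3_a dab dac dbc hdeg.
have hdeg' : forall j, is_edge p [set x; j] <-> j = yb \/ j = yc \/ j = ya.
  by move=> j; rewrite hdeg; tauto.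
have dba : yb != ya by rewrite eq_sym.
have dca : yc != ya by rewrite eq_sym.
have dcb : yc != yb by rewrite eq_sym.
have [_ [bbc fbc] [bba fba]] := deg3_a dbc dba dca hdeg'.
have ea : is_edge p [set x; ya] by apply/hdeg; left.
have eb : is_edge p [set x; yb] by apply/hdeg; right; left.
have ec : is_edge p [set x; yc] by apply/hdeg; right; right.
have nab := nonpar ea eb dba.
have nac := nonpar ea ec dca.
have nbc := nonpar eb ec dcb.
split => //.
- by case: fab => n l a b; apply: (face_of (be := bab)).
- by case: fac => n l a b; apply: (face_of (be := bac)).
- by case: fbc => n l a b; apply: (face_of (be := bbc)).
- move=> F hF xF; split.
  + apply: (@two_in_face x yc ya yb bac bbc bab) => //; try exact: ffun_sym.
    by rewrite det3_cyc det3_cyc.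
  + apply: (@two_in_face x yb ya yc bba bbc bac) => //.
    by rewrite det3_swap23 det3_cyc oppr_eq0.
  + exact: (@two_in_face x ya yb yc bab bac bbc).
Qed.

End Geo.


Section Span.
Variable R : realType.
Variable V : finType.
Variable p : V -> 'rV[R]_3.

Lemma span_of_rank : (exists i j k l, \rank (col_mx (p j - p i) (col_mx (p k - p i) (p l - p i))) = 3%N) ->
  forall x (b : 'rV[R]_3), (forall j, dotv (p j - p x) b = 0) -> b = 0.
Proof.
move=> [i [j [k [l rk]]]] x b hb.
have hr : forall a, dotv (p a - p i) b = 0.
  move=> a; have -> : p a - p i = (p a - p x) - (p i - p x) by rewrite opprB addrA subrK.
  by rewrite dotvBl !hb subrr.
set M := col_mx (p j - p i) (col_mx (p k - p i) (p l - p i)) in rk.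
have z0 : (0%:M : 'M[R]_1) = 0 by apply/matrixP => a c; rewrite !mxE mul0rn.
have hM : b *m M^T = 0.
  by rewrite /M !tr_col_mx !mul_mx_row !dot_mx !(dotvC b) !hr z0 !row_mx0.
have fr : row_free M^T by rewrite /row_free mxrank_tr rk.
by apply/eqP; rewrite -(mulmx_free_eq0 _ fr) hM.
Qed.
End Span.

Section Aff.
Variable R : realType.
Local Notation vec := ('rV[R]_3).

Lemma affine_comb (M : 'M[R]_3) (b u0 u1 u2 u3 u : vec) (al be ga : R) :
  u - u0 = al *: (u1 - u0) + be *: (u2 - u0) + ga *: (u3 - u0) ->
  u *m M + b = (u0 *m M + b) + al *: ((u1 *m M + b) - (u0 *m M + b))
     + be *: ((u2 *m M + b) - (u0 *m M + b)) + ga *: ((u3 *m M + b) - (u0 *m M + b)).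
Proof.
move=> hW.
have hu : u = u0 + (al *: (u1 - u0) + be *: (u2 - u0) + ga *: (u3 - u0)) by rewrite -hW addrC subrK.
rewrite hu !mulmxDl -!scalemxAl !mulmxBl.
by apply: eq3; rewrite !mxE; ring.
Qed.

Lemma same3 (M M' : 'M[R]_3) (b b' u0 u1 u2 u3 u : vec) (al be ga : R) :
  u - u0 = al *: (u1 - u0) + be *: (u2 - u0) + ga *: (u3 - u0) ->
  u0 *m M + b = u0 *m M' + b' -> u1 *m M + b = u1 *m M' + b' ->
  u2 *m M + b = u2 *m M' + b' -> u3 *m M + b = u3 *m M' + b' ->
  u *m M + b = u *m M' + b'.
Proof.
move=> hW e0 e1 e2 e3.
by rewrite (affine_comb M b hW) (affine_comb M' b' hW) e0 e1 e2 e3.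
Qed.

Lemma cramer_sub (d1 d2 d3 w : vec) : det3 d1 d2 d3 != 0 ->
  w = (det3 w d2 d3 / det3 d1 d2 d3) *: d1 + (det3 d1 w d3 / det3 d1 d2 d3) *: d2
      + (det3 d1 d2 w / det3 d1 d2 d3) *: d3.
Proof.
move=> hD; have := congr1 (fun v => (det3 d1 d2 d3)^-1 *: v) (cramer d1 d2 d3 w).
by rewrite /= scalerA mulVf // scale1r !scalerDr !scalerA ![_^-1 * _]mulrC.
Qed.

Lemma linmap (d1 d2 d3 e1 e2 e3 : vec) : det3 d1 d2 d3 != 0 ->
  exists M : 'M[R]_3, [/\ d1 *m M = e1, d2 *m M = e2 & d3 *m M = e3].
Proof.
move=> hD.
set D := det3 d1 d2 d3 in hD *.
exists (D^-1 *: ((cross d2 d3)^T *m e1 + (cross d3 d1)^T *m e2 + (cross d1 d2)^T *m e3)).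
have key : forall w : vec, w *m (D^-1 *: ((cross d2 d3)^T *m e1 + (cross d3 d1)^T *m e2 + (cross d1 d2)^T *m e3))
   = D^-1 *: (dotv w (cross d2 d3) *: e1 + dotv w (cross d3 d1) *: e2 + dotv w (cross d1 d2) *: e3).
  by move=> w; rewrite -scalemxAr !mulmxDr !mulmxA !dot_mx !mul_scalar_mx.
have c1 : dotv d1 (cross d2 d3) = D by [].
have c2 : dotv d2 (cross d3 d1) = D by rewrite -/(det3 d2 d3 d1) det3_cyc.
have c3 : dotv d3 (cross d1 d2) = D by rewrite -/(det3 d3 d1 d2) -det3_cyc.
have z1 : forall a c : vec, dotv a (cross a c) = 0 by move=> a c; rewrite dotvC cross_dotl.
have z2 : forall a c : vec, dotv a (cross c a) = 0 by move=> a c; rewrite dotvC cross_dotr.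
split; rewrite key.
- by rewrite c1 z2 z1 !scale0r !addr0 scalerA mulVf // scale1r.
- by rewrite c2 z2 z1 !scale0r add0r addr0 scalerA mulVf // scale1r.
- by rewrite c3 z2 z1 !scale0r !add0r scalerA mulVf // scale1r.
Qed.

End Aff.

Section Main.
Variable R : realType.
Local Notation vec := ('rV[R]_3).
Variables V V' : finType.
Variable p : V -> vec.
Variable q : V' -> vec.
Variable f : V -> V'.
Hypothesis hp : strictly_convex_polyhedron p.
Hypothesis hF : forall F, is_face p F -> affine_on p q f F.

Local Notation W x j := (p j - p x).

Definition agr (M : 'M[R]_3) (b : vec) j := q (f j) = p j *m M + b.
Definition good M b x := forall F, is_face p F -> x \in F -> forall j, j \in F -> agr M b j.

Let hinj : injective p. Proof. by case: hp. Qed.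
Let hexp : forall i, face_set p [set i]. Proof. by case: hp. Qed.
Let hspan : forall x (b : vec), (forall j, dotv (W x j) b = 0) -> b = 0.
Proof. by case: hp => _ _ h; apply: span_of_rank. Qed.

Lemma agr_same (M M' : 'M[R]_3) b b' j : agr M b j -> agr M' b' j -> p j *m M + b = p j *m M' + b'.
Proof. by rewrite /agr => <- <-. Qed.

Lemma vertex_map x ya yb yc : det3 (W x ya) (W x yb) (W x yc) != 0 ->
  exists M b, [/\ agr M b x, agr M b ya, agr M b yb & agr M b yc].
Proof.
move=> hD.
have [M [h1 h2 h3]] := linmap (q (f ya) - q (f x)) (q (f yb) - q (f x)) (q (f yc) - q (f x)) hD.
exists M, (q (f x) - p x *m M); rewrite /agr; split.
- by rewrite addrC subrK.
- by rewrite addrCA -mulmxBl h1 addrC subrK.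
- by rewrite addrCA -mulmxBl h2 addrC subrK.
- by rewrite addrCA -mulmxBl h3 addrC subrK.
Qed.


Lemma plane_agr x k l F M b j : is_face p F -> x \in F -> k \in F -> l \in F -> j \in F ->
  cross (W x k) (W x l) != 0 -> agr M b x -> agr M b k -> agr M b l -> agr M b j.
Proof.
move=> hFf xF kF lF jF hc ax ak al.
have [MF [bF [_ hMF]]] := hF hFf.
have [aF [aFn aFle aFS]] := face_funW hFf.1 xF.
set n := cross (W x k) (W x l) in hc.
have hpar : aF = (dotv n aF / dotv n n) *: n.
  apply: par => //; rewrite /n cross_cross2.
  by rewrite (proj1 (aFS k) kF) (proj1 (aFS l) lF) !scale0r subrr.
have hjn : dotv (W x j) n = 0.
  have := proj1 (aFS j) jF; rewrite {1}hpar dotvZr => /eqP; rewrite mulf_eq0 => /orP [|/eqP //].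
  rewrite mulf_eq0 invr_eq0 (negbTE (dotv_neq0 hc)) orbF => /eqP e.
  by move: aFn; rewrite hpar e mul0r scale0r eqxx.
have hD : det3 (W x k) (W x l) n != 0.
  have -> : det3 (W x k) (W x l) n = dotv n n.
    by rewrite /det3 /n !dotvE ?cx0 ?cx1 ?cx2 ?cx0 ?cx1 ?cx2; ring.
  exact: dotv_neq0.
have hj := cramer_sub (W x j) hD.
have g0 : det3 (W x k) (W x l) (W x j) = 0 by rewrite -det3_dot -/n dotvC.
rewrite g0 mul0r scale0r addr0 in hj.
have hW : p j - p x = (det3 (W x j) (W x l) n / det3 (W x k) (W x l) n) *: (p k - p x)
   + (det3 (W x k) (W x j) n / det3 (W x k) (W x l) n) *: (p l - p x) + 0 *: (p x - p x).
  by rewrite scale0r addr0 -hj.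
rewrite /agr (hMF j jF).
apply: (same3 hW); [exact: agr_same (hMF x xF) ax | exact: agr_same (hMF k kF) ak | exact: agr_same (hMF l lF) al | exact: agr_same (hMF x xF) ax].
Qed.

Lemma good_from x ya yb yc M b : ya != yb -> ya != yc -> yb != yc ->
  (forall j, is_edge p [set x; j] <-> j = ya \/ j = yb \/ j = yc) ->
  agr M b x -> agr M b ya -> agr M b yb -> agr M b yc -> good M b x.
Proof.
move=> dab dac dbc hdeg ax aa ab ac.
have [hD _ _ _ two] := deg3_full hinj hexp hspan dab dac dbc hdeg.
have ea : is_edge p [set x; ya] by apply/hdeg; left.
have eb : is_edge p [set x; yb] by apply/hdeg; right; left.
have ec : is_edge p [set x; yc] by apply/hdeg; right; right.
have nab : cross (W x ya) (W x yb) != 0 by apply: (nonpar hinj ea eb); rewrite eq_sym.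
have nac : cross (W x ya) (W x yc) != 0 by apply: (nonpar hinj ea ec); rewrite eq_sym.
have nbc : cross (W x yb) (W x yc) != 0 by apply: (nonpar hinj eb ec); rewrite eq_sym.
move=> F hFf xF j jF.
have [t1 t2 t3] := two F hFf xF.
case: (boolP (ya \in F)) => aF.
- case: (boolP (yb \in F)) => bF.
  + exact: (plane_agr hFf xF aF bF jF nab ax aa ab).
  + have cF : yc \in F by case: t3 => //; rewrite (negbTE bF).
    exact: (plane_agr hFf xF aF cF jF nac ax aa ac).
- have bF : yb \in F by case: t1 => //; rewrite (negbTE aF).
  have cF : yc \in F by case: t2 => //; rewrite (negbTE aF).
  exact: (plane_agr hFf xF bF cF jF nbc ax ab ac).
Qed.


Lemma step x x' M b : degree3 p x -> degree3 p x' -> good M b x -> is_edge p [set x; x'] -> good M b x'.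
Proof.
move=> [ya [yb [yc [dab dac dbc hdeg]]]] [za [zb [zc [d1 d2 d3 hdeg']]]] gx ex'.
have [hD [Fab [Fab1 Fab2 Fab3 Fab4]] [Fac [Fac1 Fac2 Fac3 Fac4]] [Fbc [Fbc1 Fbc2 Fbc3 Fbc4]] _]
  := deg3_full hinj hexp hspan dab dac dbc hdeg.
have cov : exists G1 G2, [/\ is_face p G1, is_face p G2, x' \in G1, x' \in G2 &
   forall z, z = x \/ z = ya \/ z = yb \/ z = yc -> z \in G1 \/ z \in G2].
  case/hdeg: ex' => [->|[->|->]].
  - exists Fab, Fac; split => // z [->|[->|[->|->]]]; by [left | right].
  - exists Fab, Fbc; split => // z [->|[->|[->|->]]]; by [left | right].
  - exists Fac, Fbc; split => // z [->|[->|[->|->]]]; by [left | right].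
have [G1 [G2 [g1 g2 xg1 xg2 hcov]]] := cov.
have [hD' _ _ _ _] := deg3_full hinj hexp hspan d1 d2 d3 hdeg'.
have [M' [b' [a0 a1 a2 a3]]] := vertex_map hD'.
have gx' := good_from d1 d2 d3 hdeg' a0 a1 a2 a3.
have agM : forall z, z = x \/ z = ya \/ z = yb \/ z = yc -> agr M b z.
  move=> z hz.
  have zF : z \in Fab \/ z \in Fac.
    by case: hz => [->|[->|[->|->]]]; by [left | right].
  by case: zF => zF; [apply: (gx Fab) | apply: (gx Fac)].
have agM' : forall z, z = x \/ z = ya \/ z = yb \/ z = yc -> agr M' b' z.
  move=> z hz; case: (hcov z hz) => zG; [exact: (gx' G1) | exact: (gx' G2)].
have all : forall z, p z *m M + b = p z *m M' + b'.
  move=> z; have hz := cramer_sub (W x z) hD.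
  apply: (same3 hz); apply: agr_same; by [apply: agM; tauto | apply: agM'; tauto].
move=> F hFf x'F j jF; rewrite /agr all; exact: (gx' F).
Qed.


Lemma path_good M b x s : edge_path p x s -> (forall y, y \in x :: s -> degree3 p y) ->
  good M b x -> forall y, y \in x :: s -> good M b y.
Proof.
elim: s x => [|z s IH] x /=.
- by move=> _ _ gx y; rewrite inE => /eqP ->.
- move=> [exz hpath] hdeg gx y; rewrite inE => /orP [/eqP -> //|ys].
  have gz : good M b z.
    apply: (step (x := x)) => //; apply: hdeg; rewrite !inE eqxx ?orbT //.
  apply: (IH z) => // w hw; apply: hdeg; by rewrite inE hw orbT.
Qed.

Lemma agr_all M b x0 s : edge_path p x0 s -> (forall y, y \in x0 :: s -> degree3 p y) ->
  (forall F, is_face p F -> exists2 y, y \in x0 :: s & y \in F) ->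
  good M b x0 -> forall v, agr M b v.
Proof.
move=> hpath hdeg hcov gx0 v.
have [F [hFf vF]] := every_vertex_in_face hinj hexp hspan v.
have [y yin yF] := hcov F hFf.
exact: (path_good hpath hdeg gx0 yin hFf yF).
Qed.

End Main.

Theorem theorem5_proof (R : realType) (V V' : finType)
  (p : V -> 'rV[R]_3) (q : V' -> 'rV[R]_3) (f : V -> V')
  (x0 : V) (s : seq V) :
  strictly_convex_polyhedron p ->
  strictly_convex_polyhedron q ->
  comb_equiv p q f ->
  (forall F, is_face p F -> affine_on p q f F) ->
  edge_path p x0 s ->
  (forall x, x \in x0 :: s -> degree3 p x) ->
  (forall F, is_face p F -> exists2 x, x \in x0 :: s & x \in F) ->
  affine_on p q f setT.
Proof.
move=> hp hq [fbij _ _] hF hpath hdeg hcov.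
have hinj : injective p by case: hp.
have hexp : forall i, face_set p [set i] by case: hp.
have hspan := span_of_rank (let: And3 _ _ h := hp in h).
have [ya [yb [yc [dab dac dbc hd]]]] := hdeg x0 (mem_head _ _).
have [hD _ _ _ _] := deg3_full hinj hexp hspan dab dac dbc hd.
have [M [b [a0 a1 a2 a3]]] := vertex_map q f hD.
have gx0 := good_from hp hF dab dac dbc hd a0 a1 a2 a3.
have hall := agr_all hp hF hpath hdeg hcov gx0.
exists M, b; split => [|i _]; last exact: hall.
case: hq => _ _ [i [j [k [l rk]]]].
case: fbij => g gK fK.
have e : forall a c, q a - q c = (p (g a) - p (g c)) *m M.
  move=> a c; rewrite -{1}(fK a) -{1}(fK c) !hall mulmxBl.
  by apply: eq3; rewrite !mxE; ring.
move: rk; rewrite !e -!mul_col_mx => rk.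
have : (3 <= \rank M)%N by rewrite -{1}rk mxrankM_maxr.
move=> h3; rewrite -row_free_unit /row_free eqn_leq rank_leq_row.
exact: h3.
Qed.

Unset Implicit Arguments.

Theorem theorem5 (R : realType) (V V' : finType)
  (p : V -> 'rV[R]_3) (q : V' -> 'rV[R]_3) (f : V -> V')
  (x0 : V) (s : seq V) :
  strictly_convex_polyhedron p ->
  strictly_convex_polyhedron q ->
  comb_equiv p q f ->
  (forall F, is_face p F -> affine_on p q f F) ->
  edge_path p x0 s ->
  (forall x, x \in x0 :: s -> degree3 p x) ->
  (forall F, is_face p F -> exists2 x, x \in x0 :: s & x \in F) ->
  affine_on p q f setT.
Proof. exact: theorem5_proof. Qed.
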